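(* Let $R,C>0$, $\kappa\ge1>\overline\lambda>\underline\lambda>0$ and $\alpha\in(0,1)$. Then there exist $\xi_0>0$ and $\overline\kappa>1$ such that every infinite sequence $\{h_j\}_{j=1}^\infty$ satisfying, for all $j$: (H0) $h_j:B_R\to h_j(B_R)$ is a $\mathcal{C}^{1+\alpha}$ diffeomorphism with $h_j(0)=0$; (H1) $\|h_j\|_{\mathcal{C}^{1+\alpha}}<C$; (H2) $\underline\lambda<m(D_yh_j)\le\|D_yh_j\|<\overline\lambda$ for all $y\in B_R$; (H3) $D_0h^j$ is $\kappa$-conformal — is $\overline\kappa$-conformal at every point of $B_{\xi_0}$, i.e. $D_xh^n$ is $\overline\kappa$-conformal for all $x\in B_{\xi_0}$ and all $n\in\mathbb{N}$.
   Context: $B_r$ is the open Euclidean ball about $0$ in $\mathbb{R}^d$; $h^n=h_n\circ\cdots\circ h_1$; $m(D)=\inf_{|v|=1}|Dv|$; $D$ is $\kappa$-conformal if $\|D\|\,\|D^{-1}\|\le\kappa$; $\|h\|_{\mathcal{C}^{1+\alpha}}=\|h\|_{\mathcal{C}^1}+\sup\{\|D_xh-D_yh\|/|x-y|^\alpha:0<|x-y|<1\}$. *)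

(* Defs.v *)
From HB Require Import structures.
From mathcomp Require Import all_boot all_order all_algebra.
From mathcomp Require Import all_classical all_reals all_analysis.
Set Implicit Arguments. Unset Strict Implicit. Unset Printing Implicit Defensive.
Import Order.TTheory GRing.Theory Num.Theory.
Import numFieldNormedType.Exports.
Local Open Scope classical_set_scope.
Local Open Scope ring_scope.

Section Defs.
Variables (R : realType) (d : nat).
Notation vec := 'rV[R]_d.

Definition enorm (v : vec) : R := Num.sqrt (\sum_(i < d) (v ord0 i) ^+ 2).

Definition Bball (r : R) : set vec := [set x | enorm x < r].

(* a linear map R^d -> R^d is represented by a matrix D acting by v |-> v *m D *)
Definition unit_sphere : set vec := [set v | enorm v = 1].

Definition opnorm (D : 'M[R]_d) : R := sup [set enorm (v *m D) | v in unit_sphere].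

Definition mnorm (D : 'M[R]_d) : R := inf [set enorm (v *m D) | v in unit_sphere].

Definition conformal (kappa : R) (D : 'M[R]_d) : Prop :=
  D \in unitmx /\ opnorm D * opnorm (invmx D) <= kappa.

Definition jac (f : vec -> vec) (x : vec) : 'M[R]_d :=
  \matrix_(i < d, j < d) ('d f x (delta_mx ord0 i : vec)) ord0 j.

Definition C1_on (U : set vec) (f : vec -> vec) : Prop :=
  (forall x, U x -> differentiable f x) /\
  (forall x, U x -> {for x, continuous (jac f)}).

Definition C1alpha_norm (Rr alpha : R) (h : vec -> vec) : \bar R :=
  (ereal_sup [set (enorm (h x))%:E | x in Bball Rr] +
   ereal_sup [set (opnorm (jac h x))%:E | x in Bball Rr] +
   ereal_sup [set e | exists x y, [/\ Bball Rr x, Bball Rr y,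
                (0 < enorm (x - y) < 1)%R &
                e = ((opnorm (jac h x - jac h y) / (enorm (x - y)) `^ alpha)%R)%:E]])%E.

Definition C1alpha_diffeo (Rr alpha : R) (h : vec -> vec) : Prop :=
  [/\ C1_on (Bball Rr) h,
      (exists K : R, forall x y, Bball Rr x -> Bball Rr y ->
          opnorm (jac h x - jac h y) <= K * (enorm (x - y)) `^ alpha),
      {in Bball Rr &, injective h},
      open (h @` Bball Rr) &
      exists g : vec -> vec,
        (forall x, Bball Rr x -> g (h x) = x) /\
        (forall y, (h @` Bball Rr) y -> Bball Rr (g y) /\ h (g y) = y) /\
        C1_on (h @` Bball Rr) g].

(* iterates: h^0 = id, h^(n+1) = h_(n+1) o h^n, where h_(j+1) is hs j *)
Fixpoint iter_seq (hs : nat -> vec -> vec) (n : nat) : vec -> vec :=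
  match n with
  | O => id
  | S n' => hs n' \o iter_seq hs n'
  end.

End Defs.

(* Main.v *)
Require Import Defs.
From HB Require Import structures.
From mathcomp Require Import all_boot all_order all_algebra.
From mathcomp Require Import all_classical all_reals all_analysis.
Import Order.TTheory GRing.Theory Num.Theory.
Import numFieldNormedType.Exports.
Local Open Scope classical_set_scope.
Local Open Scope ring_scope.
From mathcomp Require Import ring lra.


Definition dotv {R : realType} {d : nat} (u v : 'rV[R]_d) : R :=
  \sum_(i < d) u ord0 i * v ord0 i.

Lemma dotvv {R : realType} {d : nat} (v : 'rV[R]_d) :
  dotv v v = \sum_(i < d) (v ord0 i) ^+ 2.
Proof. by apply: eq_bigr => i _; rewrite expr2. Qed.

Lemma dotvv_ge0 {R : realType} {d : nat} (v : 'rV[R]_d) : 0 <= dotv v v.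
Proof. by rewrite dotvv; apply: sumr_ge0 => i _; rewrite sqr_ge0. Qed.

Lemma enorm_ge0 {R : realType} {d : nat} (v : 'rV[R]_d) : 0 <= enorm v.
Proof. exact: sqrtr_ge0. Qed.

Lemma enorm_sq {R : realType} {d : nat} (v : 'rV[R]_d) :
  enorm v ^+ 2 = dotv v v.
Proof. by rewrite /enorm sqr_sqrtr -?dotvv // dotvv_ge0. Qed.

Lemma enorm_eq0 {R : realType} {d : nat} (v : 'rV[R]_d) : enorm v = 0 -> v = 0.
Proof.
move=> h; have : \sum_(i < d) (v ord0 i) ^+ 2 = 0.
  apply/eqP; rewrite eq_le -dotvv dotvv_ge0 andbT.
  by rewrite -sqrtr_eq0 -/(enorm v) h.
move=> /psumr_eq0P H; apply/rowP => i; rewrite mxE.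
by apply/eqP; rewrite -sqrf_eq0; apply/eqP; apply: H => // j _; rewrite sqr_ge0.
Qed.

Lemma enorm0 {R : realType} {d : nat} : enorm (0 : 'rV[R]_d) = 0.
Proof. by rewrite /enorm big1 ?sqrtr0 // => i _; rewrite mxE expr0n. Qed.

Lemma enormZ {R : realType} {d : nat} (a : R) (v : 'rV[R]_d) :
  enorm (a *: v) = `|a| * enorm v.
Proof.
rewrite /enorm -sqrtr_sqr -sqrtrM ?sqr_ge0 //; congr Num.sqrt.
by rewrite mulr_sumr; apply: eq_bigr => i _; rewrite mxE exprMn.
Qed.

Lemma enormN {R : realType} {d : nat} (v : 'rV[R]_d) : enorm (- v) = enorm v.
Proof. by rewrite -scaleN1r enormZ normrN normr1 mul1r. Qed.

Lemma dotvC {R : realType} {d : nat} (u v : 'rV[R]_d) : dotv u v = dotv v u.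
Proof. by apply: eq_bigr => i _; rewrite mulrC. Qed.

Lemma dotv_CS {R : realType} {d : nat} (u v : 'rV[R]_d) :
  dotv u v <= enorm u * enorm v.
Proof.
set a := enorm v; set b := enorm u.
have a0 : 0 <= a by exact: enorm_ge0.
have b0 : 0 <= b by exact: enorm_ge0.
have key : 0 <= a^+2 * b^+2 * 2 - 2 * a * b * dotv u v.
  have : 0 <= \sum_(i < d) (a * u ord0 i - b * v ord0 i) ^+ 2.
    by apply: sumr_ge0 => i _; rewrite sqr_ge0.
  suff -> : \sum_(i < d) (a * u ord0 i - b * v ord0 i) ^+ 2 =
     a^+2 * b^+2 * 2 - 2 * a * b * dotv u v by [].
  have eu : b ^+ 2 = \sum_(i < d) (u ord0 i)^+2 by rewrite /b enorm_sq dotvv.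
  have ev : a ^+ 2 = \sum_(i < d) (v ord0 i)^+2 by rewrite /a enorm_sq dotvv.
  transitivity (a^+2 * \sum_(i < d) (u ord0 i)^+2 - 2 * a * b * dotv u v
                 + b^+2 * \sum_(i < d) (v ord0 i)^+2); last first.
    by rewrite -eu -ev; ring.
  rewrite /dotv !mulr_sumr -sumrN -!big_split /=; apply: eq_bigr => i _; ring.
have [ab0|abp] := eqVneq (a * b) 0.
  have : (a == 0) || (b == 0) by rewrite -mulf_eq0 ab0.
  case/orP=> [/eqP/enorm_eq0 -> | /eqP/enorm_eq0 ->];
    by rewrite /dotv big1 ?mulr_ge0 // => i _; rewrite mxE ?mulr0 ?mul0r.
have abgt : 0 < a * b by rewrite lt_def abp /=; exact: mulr_ge0.
have : 2 * (a * b) * dotv u v <= 2 * (a * b) * (a * b).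
  lra.
rewrite ler_pM2l; last by rewrite mulr_gt0.
by rewrite mulrC.
Qed.

Lemma dotvDl {R : realType} {d : nat} (u v w : 'rV[R]_d) :
  dotv (u + v) w = dotv u w + dotv v w.
Proof. by rewrite /dotv -big_split; apply: eq_bigr => i _; rewrite mxE mulrDl. Qed.

Lemma enormD {R : realType} {d : nat} (u v : 'rV[R]_d) :
  enorm (u + v) <= enorm u + enorm v.
Proof.
rewrite -(ler_sqr (enorm_ge0 _)); last by rewrite nnegrE addr_ge0 ?enorm_ge0.
rewrite enorm_sq dotvDl !(dotvC _ (u + v)) !dotvDl.
rewrite -!enorm_sq sqrrD (dotvC v u).
have := dotv_CS u v; lra.
Qed.

Lemma enormB {R : realType} {d : nat} (u v : 'rV[R]_d) :
  enorm u - enorm v <= enorm (u - v).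
Proof.
have := enormD (u - v) v; rewrite subrK; lra.
Qed.

Lemma coord_le_enorm {R : realType} {d : nat} (v : 'rV[R]_d) i :
  `|v ord0 i| <= enorm v.
Proof.
rewrite -sqrtr_sqr /enorm ler_sqrt; last by apply: sumr_ge0 => j _; rewrite sqr_ge0.
by rewrite (bigD1 i) //= lerDl; apply: sumr_ge0 => j _; rewrite sqr_ge0.
Qed.

Lemma enorm_sum {R : realType} {d : nat} {I : finType} (F : I -> 'rV[R]_d) :
  enorm (\sum_i F i) <= \sum_i enorm (F i).
Proof.
apply: (big_ind2 (fun x y => enorm x <= y)); first by rewrite enorm0.
  by move=> x1 x2 y1 y2 h1 h2; apply: le_trans (enormD _ _) _; exact: lerD.
by [].
Qed.

Lemma opnorm_hasub {R : realType} {d : nat} (D : 'M[R]_d) :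
  has_ubound [set enorm (v *m D) | v in unit_sphere (R:=R) (d:=d)].
Proof.
exists (\sum_i enorm (row i D)) => _ [v vS <-].
rewrite mulmx_sum_row; apply: le_trans (enorm_sum _) _.
apply: ler_sum => i _; rewrite enormZ.
apply: ler_piMl; first exact: enorm_ge0.
by rewrite -vS coord_le_enorm.
Qed.

Lemma normalize {R : realType} {d : nat} (v : 'rV[R]_d) :
  v != 0 -> enorm ((enorm v)^-1 *: v) = 1.
Proof.
move=> v0; have e0 : enorm v != 0 by apply: contra v0 => /eqP/enorm_eq0 ->.
rewrite enormZ ger0_norm ?invr_ge0 ?enorm_ge0 // mulVf //.
Qed.

Lemma opnorm_ub {R : realType} {d : nat} (D : 'M[R]_d) (v : 'rV[R]_d) :
  enorm (v *m D) <= opnorm D * enorm v.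
Proof.
have [->|v0] := eqVneq v 0; first by rewrite mul0mx enorm0 mulr0.
have e0 : 0 < enorm v by rewrite lt_def enorm_ge0 andbT; apply: contra v0 => /eqP/enorm_eq0 ->.
have := ub_le_sup (opnorm_hasub D).
move=> /(_ (enorm (((enorm v)^-1 *: v) *m D))) h.
have : enorm (((enorm v)^-1 *: v) *m D) <= opnorm D.
  by apply: h; exists ((enorm v)^-1 *: v) => //; exact: normalize.
rewrite -scalemxAl enormZ ger0_norm ?invr_ge0 ?enorm_ge0 //.
by rewrite mulrC -ler_pdivlMr ?invr_gt0 // invrK.
Qed.

Lemma opnorm_le {R : realType} {d : nat} (D : 'M[R]_d) (b : R) :
  0 <= b -> (forall v, enorm v = 1 -> enorm (v *m D) <= b) -> opnorm D <= b.
Proof.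
move=> b0 h; rewrite /opnorm.
case: (pselect ([set enorm (v *m D) | v in unit_sphere (R:=R) (d:=d)] !=set0)).
  move=> ne; apply: ge_sup => // _ [v vS <-]; exact: h.
move=> ne; suff -> : [set enorm (v *m D) | v in unit_sphere (R:=R) (d:=d)] = set0 by rewrite sup0.
by apply/seteqP; split => // x Sx; apply: ne; exists x.
Qed.

Lemma opnorm_ge0 {R : realType} {d : nat} (D : 'M[R]_d) : 0 <= opnorm D.
Proof.
rewrite /opnorm.
case: (pselect ([set enorm (v *m D) | v in unit_sphere (R:=R) (d:=d)] !=set0)).
  move=> [x Sx]; have h := ub_le_sup (opnorm_hasub D) Sx.
  apply: le_trans h; by case: Sx => v _ <-; exact: enorm_ge0.
move=> ne; suff -> : [set enorm (v *m D) | v in unit_sphere (R:=R) (d:=d)] = set0 by rewrite sup0.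
by apply/seteqP; split => // x Sx; apply: ne; exists x.
Qed.

Lemma opnormM {R : realType} {d : nat} (A B : 'M[R]_d) :
  opnorm (A *m B) <= opnorm A * opnorm B.
Proof.
apply: opnorm_le; first by rewrite mulr_ge0 ?opnorm_ge0.
move=> v v1; rewrite mulmxA; apply: le_trans (opnorm_ub _ _) _.
rewrite [X in _ <= X]mulrC; apply: ler_wpM2l; first exact: opnorm_ge0.
by apply: le_trans (opnorm_ub _ _) _; rewrite v1 mulr1.
Qed.

Lemma opnormD {R : realType} {d : nat} (A B : 'M[R]_d) :
  opnorm (A + B) <= opnorm A + opnorm B.
Proof.
apply: opnorm_le; first by rewrite addr_ge0 ?opnorm_ge0.
move=> v v1; rewrite mulmxDr; apply: le_trans (enormD _ _) _.
apply: lerD; apply: le_trans (opnorm_ub _ _) _; by rewrite v1 mulr1.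
Qed.

Lemma opnorm1 {R : realType} {d : nat} : opnorm (1%:M : 'M[R]_d) <= 1.
Proof. by apply: opnorm_le => // v v1; rewrite mulmx1 v1. Qed.

Lemma lowerb_inv {R : realType} {d : nat} (A : 'M[R]_d) (c : R) :
  0 < c -> (forall v, c * enorm v <= enorm (v *m A)) ->
  A \in unitmx /\ opnorm (invmx A) <= c^-1.
Proof.
move=> c0 h.
have uA : A \in unitmx.
  rewrite unitmxE unitfE; apply/negP => /det0P [v v0 vA].
  have := h v; rewrite vA enorm0.
  have e0 : 0 < enorm v by rewrite lt_def enorm_ge0 andbT; apply: contra v0 => /eqP/enorm_eq0 ->.
  by rewrite pmulr_rle0 // leNgt e0.
split=> //; apply: opnorm_le; first by rewrite invr_ge0 ltW.
move=> v v1; have := h (v *m invmx A); rewrite mulmxKV // v1.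
by rewrite mulrC -ler_pdivlMr // div1r.
Qed.

Lemma mnorm_lb {R : realType} {d : nat} (D : 'M[R]_d) (v : 'rV[R]_d) :
  mnorm D * enorm v <= enorm (v *m D).
Proof.
have [->|v0] := eqVneq v 0; first by rewrite mul0mx enorm0 mulr0.
have e0 : 0 < enorm v by rewrite lt_def enorm_ge0 andbT; apply: contra v0 => /eqP/enorm_eq0 ->.
have hl : has_lbound [set enorm (v *m D) | v in unit_sphere (R:=R) (d:=d)].
  by exists 0 => _ [w _ <-]; exact: enorm_ge0.
have := ge_inf hl.
move=> /(_ (enorm (((enorm v)^-1 *: v) *m D))) h.
have : mnorm D <= enorm (((enorm v)^-1 *: v) *m D).
  by apply: h; exists ((enorm v)^-1 *: v) => //; exact: normalize.
rewrite -scalemxAl enormZ ger0_norm ?invr_ge0 ?enorm_ge0 //.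
by rewrite mulrC -ler_pdivlMr ?invr_gt0 // invrK.
Qed.

Lemma mnorm_inv {R : realType} {d : nat} (A : 'M[R]_d) :
  0 < mnorm A -> A \in unitmx /\ opnorm (invmx A) <= (mnorm A)^-1.
Proof. by move=> m0; apply: lowerb_inv => // v; exact: mnorm_lb. Qed.

Lemma pert_inv {R : realType} {d : nat} (G : 'M[R]_d) (t : R) :
  opnorm G <= t -> t < 1 ->
  (1%:M + G) \in unitmx /\ opnorm (invmx (1%:M + G)) <= (1 - t)^-1.
Proof.
move=> Gt t1; apply: lowerb_inv; first by rewrite subr_gt0.
move=> v; rewrite mulmxDr mulmx1.
have := enormB v (- (v *m G)); rewrite opprK enormN.
have := opnorm_ub G v.
have := enorm_ge0 v.
have : opnorm G * enorm v <= t * enorm v by apply: ler_wpM2r => //; exact: enorm_ge0.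
lra.
Qed.


Lemma row_jac {R : realType} {d : nat} (f : 'rV[R]_d -> 'rV[R]_d) x i :
  row i (jac f x) = 'd f x (delta_mx 0 i).
Proof. by apply/rowP => j; rewrite !mxE. Qed.

Lemma jac_mul {R : realType} {d : nat} (f : 'rV[R]_d -> 'rV[R]_d) x v :
  v *m jac f x = 'd f x v.
Proof.
rewrite mulmx_sum_row {2}(row_sum_delta v) linear_sum; apply: eq_bigr => i _.
by rewrite row_jac linearZ.
Qed.

Opaque jac.
Lemma jac_comp {R : realType} {d : nat} (f g : 'rV[R]_d -> 'rV[R]_d) x :
  differentiable f x -> differentiable g (f x) ->
  jac (g \o f) x = jac f x *m jac g (f x).
Proof.
move=> df dg; apply/row_matrixP => i.
transitivity ('d (g \o f) x (delta_mx 0 i)); first exact: row_jac.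
transitivity (row i (jac f x) *m jac g (f x)); last exact: (esym (row_mul _ _ _)).
transitivity ('d f x (delta_mx 0 i) *m jac g (f x)); last first.
  exact: (congr1 (fun M => M *m jac g (f x)) (esym (row_jac f x i))).
transitivity ('d g (f x) ('d f x (delta_mx 0 i))); last exact: (esym (jac_mul _ _ _)).
exact: (congr1 (fun F => F (delta_mx 0 i)) (diff_comp df dg)).
Qed.
Lemma jac_id {R : realType} {d : nat} (x : 'rV[R]_d) : jac id x = 1%:M.
Proof.
apply/row_matrixP => i.
transitivity ('d id x (delta_mx 0 i)); first exact: row_jac.
transitivity (delta_mx 0 i : 'rV[R]_d); last exact: (esym (row1 _ _)).
have h : 'd id x = id :> ('rV[R]_d -> 'rV[R]_d) := diff_val.
by rewrite h.
Qed.


Lemma dot_diff {R : realType} {d : nat} (w : 'rV[R]_d) :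
  exists LL : {linear 'rV[R]_d -> R},
   (forall u, LL u = dotv u w) /\ continuous LL.
Proof.
pose L := fun u : 'rV[R]_d => dotv u w.
have Llin : linear L.
  move=> a u v; rewrite /L /dotv; have sE : forall s : R, a *: s = a * s by [].
  rewrite sE mulr_sumr -big_split; apply: eq_bigr => i _.
  by rewrite !mxE mulrDl mulrA.
pose LM := GRing.isLinear.Build _ _ _ _ L Llin.
pose LL : {linear 'rV[R]_d -> R} := HB.pack L LM.
exists LL; split => // u.
have dL : differentiable L u.
  have -> : L = \sum_(i < d) (fun u : 'rV[R]_d => u ord0 i *: (w ord0 i : R)).
    by rewrite fct_sumE; apply/funext => v.
  apply: differentiable_sum => i.
  apply: (@differentiableZl _ _ _ (fun u : 'rV[R]_d => u ord0 i)).
  exact: differentiable_coord.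
exact: differentiable_continuous.
Qed.

Lemma contract {R : realType} {d : nat} (h : 'rV[R]_d -> 'rV[R]_d) (r lam : R)
  (y : 'rV[R]_d) :
  (forall z, Bball r z -> differentiable h z) ->
  (forall z, Bball r z -> opnorm (jac h z) <= lam) ->
  h 0 = 0 -> Bball r y -> enorm (h y) <= lam * enorm y.
Proof.
move=> dh oph h0 yB.
have [LL [LLE LLc]] := dot_diff (h y).
pose s := ( *:%R ^~ y) : R -> 'rV[R]_d.
pose phi := LL \o (h \o s).
have sB : forall t : R, 0 <= t <= 1 -> Bball r (s t).
  move=> t /andP[t0 t1]; rewrite /Bball /= /s enormZ ger0_norm //.
  apply: le_lt_trans yB; rewrite /Bball /=.
  by apply: ler_piMl => //; exact: enorm_ge0.
have ds : forall t, differentiable s t by move=> t; exact: ex_diff.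
have dphi : forall t : R, 0 <= t <= 1 -> differentiable phi t.
  move=> t ht; apply: differentiable_comp; last exact: linear_differentiable.
  apply: differentiable_comp => //; exact: dh (sB _ ht).
have hder : forall t : R, t \in `]0, 1[%R -> is_derive t (1:R) phi ('D_1 phi t).
  move=> t; rewrite in_itv /= => /andP[t0 t1]; apply: derivableP; apply: diff_derivable.
  by apply: dphi; rewrite !ltW.
have hcont : {within `[0, 1], continuous phi}.
  apply: continuous_in_subspaceT => t tin; apply: differentiable_continuous; apply: dphi.
  by move: tin; rewrite inE /= in_itv.
have [c cin eq] := MVT ltr01 hder hcont.
move: cin; rewrite in_itv /= => /andP[c0 c1].
have hc : 0 <= c <= 1 by rewrite !ltW.
have dc : 'D_1 phi c = LL ('d h (s c) y).
  rewrite deriveE; last exact: dphi.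
  have dhs : differentiable (h \o s) c by apply: differentiable_comp => //; exact: dh (sB _ hc).
  have e1 : 'd phi c = 'd LL ((h \o s) c) \o 'd (h \o s) c :> (R -> R).
    exact: diff_comp dhs (linear_differentiable _ LLc).
  have e2 : 'd LL ((h \o s) c) = LL :> (_ -> _) := diff_lin _ LLc.
  have e3 : 'd (h \o s) c = 'd h (s c) \o 'd s c :> (R -> _) := diff_comp (ds c) (dh _ (sB _ hc)).
  have e4 : 'd s c = ( *:%R ^~ y) :> (R -> _) := diff_val.
  by rewrite e1 /= e2 e3 /= e4 /= scale1r.
have p1 : phi 1 = enorm (h y) ^+ 2 by rewrite /phi /= /s scale1r LLE enorm_sq.
have p0 : phi 0 = 0 by rewrite /phi /= /s scale0r h0 linear0.
rewrite dc subr0 mulr1 p1 p0 subr0 LLE -jac_mul in eq.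
have cs := dotv_CS (y *m jac h (s c)) (h y).
have ob := opnorm_ub (jac h (s c)) y.
have ol := oph _ (sB _ hc).
have l0 : 0 <= lam by apply: le_trans (oph _ yB); exact: opnorm_ge0.
have e0 := enorm_ge0 (h y).
have y0 := enorm_ge0 y.
have o0 := opnorm_ge0 (jac h (s c)).
have f1 : enorm (y *m jac h (s c)) <= lam * enorm y.
  apply: le_trans ob _; exact: ler_wpM2r.
have f2 : enorm (h y) ^+ 2 <= lam * enorm y * enorm (h y).
  rewrite eq; apply: le_trans cs _; exact: ler_wpM2r.
have [->|en] := eqVneq (enorm (h y)) 0; first by rewrite mulr_ge0.
have ep : 0 < enorm (h y) by rewrite lt_def en e0.
by rewrite expr2 ler_pM2r in f2.
Qed.


Lemma invmxM {R : realType} {d : nat} (A B : 'M[R]_d) :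
  A \in unitmx -> B \in unitmx -> invmx (A *m B) = invmx B *m invmx A.
Proof.
move=> uA uB; have uAB : A *m B \in unitmx by rewrite unitmx_mul uA.
apply: (can_inj (mulKmx uAB)); rewrite mulmxV //.
by rewrite !mulmxA mulmxK // mulmxV.
Qed.

Lemma geom_le {R : realType} (q : R) n : 0 <= q -> q < 1 ->
  \sum_(k < n) q ^+ k <= (1 - q)^-1.
Proof.
move=> q0 q1.
have e : \sum_(k < n) q ^+ k * (1 - q) = 1 - q ^+ n.
  elim: n => [|n IH]; first by rewrite big_ord0 expr0 subrr.
  by rewrite big_ord_recr /= IH exprS; ring.
rewrite -[(1 - q)^-1]div1r ler_pdivlMr ?subr_gt0 // mulr_suml e.
by rewrite lerBlDr lerDl exprn_ge0.
Qed.

Lemma step1 {R : realType} (S g : R) : 0 <= S -> 0 <= g -> S + g <= 1/2 ->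
  (1 - S)^-1 * (1 + g) <= (1 - (S + g))^-1.
Proof.
move=> S0 g0 Sg.
have p1 : 0 < 1 - S by lra.
have p2 : 0 < 1 - (S + g) by lra.
rewrite mulrC ler_pdivrMr // mulrC ler_pdivlMr //; nra.
Qed.

Lemma step2 {R : realType} (S g : R) : 0 <= S -> 0 <= g -> S + g <= 1/2 ->
  (1 - g)^-1 * (1 - S)^-1 <= (1 - (S + g))^-1.
Proof.
move=> S0 g0 Sg.
have p1 : 0 < 1 - S by lra.
have p3 : 0 < 1 - g by lra.
have p2 : 0 < 1 - (S + g) by lra.
rewrite -invfM lef_pV2 ?posrE ?mulr_gt0 //; nra.
Qed.

Lemma iter_at0 {R : realType} {d : nat} (hs : nat -> 'rV[R]_d -> 'rV[R]_d) :
  (forall j, hs j 0 = 0) -> forall n, iter_seq hs n 0 = 0.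
Proof. by move=> H0; elim=> [//|n IH] /=; rewrite IH H0. Qed.

Lemma iter_contract {R : realType} {d : nat} (hs : nat -> 'rV[R]_d -> 'rV[R]_d)
  (r lam : R) (x : 'rV[R]_d) :
  0 <= lam -> lam <= 1 ->
  (forall j z, Bball r z -> differentiable (hs j) z) ->
  (forall j z, Bball r z -> opnorm (jac (hs j) z) <= lam) ->
  (forall j, hs j 0 = 0) -> Bball r x ->
  forall n, enorm (iter_seq hs n x) <= lam ^+ n * enorm x.
Proof.
move=> l0 l1 dh oh h0 xB; elim=> [|n IH]; first by rewrite expr0 mul1r.
have yB : Bball r (iter_seq hs n x).
  rewrite /Bball /=; apply: le_lt_trans IH _; apply: le_lt_trans xB.
  by apply: ler_piMl; [exact: enorm_ge0 | exact: exprn_ile1].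
rewrite /= exprS -mulrA.
have c := @contract _ _ (hs n) r lam _ (dh n) (oh n) (h0 n) yB.
apply: (le_trans c); exact: ler_wpM2l.
Qed.

Lemma iter_diff {R : realType} {d : nat} (hs : nat -> 'rV[R]_d -> 'rV[R]_d)
  (r : R) (x : 'rV[R]_d) :
  (forall n, Bball r (iter_seq hs n x)) ->
  (forall j z, Bball r z -> differentiable (hs j) z) ->
  forall n, differentiable (iter_seq hs n) x.
Proof.
move=> B dh; elim=> [|n IH]; first exact: ex_diff.
exact: differentiable_comp IH (dh _ _ (B n)).
Qed.

Lemma jac_iterS {R : realType} {d : nat} (hs : nat -> 'rV[R]_d -> 'rV[R]_d)
  (x : 'rV[R]_d) n :
  differentiable (iter_seq hs n) x -> differentiable (hs n) (iter_seq hs n x) ->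
  jac (iter_seq hs n.+1) x = jac (iter_seq hs n) x *m jac (hs n) (iter_seq hs n x).
Proof. move=> d1 d2; have H := @jac_comp _ _ (iter_seq hs n) (hs n) x d1 d2; exact H. Qed.

Lemma opnorm0 {R : realType} {d : nat} : opnorm (0 : 'M[R]_d) <= 0.
Proof. by apply: opnorm_le => // v _; rewrite mulmx0 enorm0. Qed.

Lemma holder_ext {R : realType} {d : nat} (h : 'rV[R]_d -> 'rV[R]_d)
  (Rr alpha C : R) (y : 'rV[R]_d) :
  (C1alpha_norm Rr alpha h < C%:E)%E -> 0 <= C -> 0 < Rr -> Bball Rr y -> enorm y < 1 ->
  opnorm (jac h y - jac h 0) <= C * (enorm y) `^ alpha.
Proof.
move=> HC C0 R0 yB y1.
have [->|y0] := eqVneq y 0.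
  by rewrite subrr; apply: le_trans opnorm0 _; rewrite mulr_ge0 ?powR_ge0.
have ey : 0 < enorm y by rewrite lt_def enorm_ge0 andbT; apply: contra y0 => /eqP/enorm_eq0 ->.
have B0 : Bball Rr (0 : 'rV[R]_d) by rewrite /Bball /= enorm0.
move: HC; rewrite /C1alpha_norm.
set S1 := ereal_sup _; set S2 := ereal_sup _; set S3 := ereal_sup _ => HC.
have S10 : (0 <= S1)%E.
  apply: le_trans (ereal_sup_ubound _); last by exists 0.
  by rewrite lee_fin enorm_ge0.
have S20 : (0 <= S2)%E.
  apply: le_trans (ereal_sup_ubound _); last by exists 0.
  by rewrite lee_fin opnorm_ge0.
set e := opnorm (jac h y - jac h 0) / (enorm (y - 0)) `^ alpha.
have S3e : (e%:E <= S3)%E.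
  apply: ereal_sup_ubound; exists y, 0; split => //.
  by rewrite subr0 ey.
have : (e%:E < C%:E)%E.
  apply: le_lt_trans HC; apply: le_trans S3e _.
  by rewrite lee_paddl // adde_ge0.
rewrite lte_fin /e subr0 ltr_pdivrMr ?powR_gt0 // => /ltW //.
Qed.


Lemma step_alg {R : realType} {d : nat} (M P A J : 'M[R]_d) (g : R) :
  M \in unitmx -> P \in unitmx -> A \in unitmx ->
  opnorm (P *m (J - A) *m invmx A *m invmx P) <= g -> g < 1 ->
  exists M' : 'M[R]_d, [/\ M' \in unitmx,
     M *m P *m J = M' *m (P *m A),
     opnorm M' <= opnorm M * (1 + g) &
     opnorm (invmx M') <= (1 - g)^-1 * opnorm (invmx M)].
Proof.
move=> uM uP uA hG g1.
set G := P *m (J - A) *m invmx A *m invmx P.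
have [uG iG] := @pert_inv _ _ G g hG g1.
exists (M *m (1%:M + G)); split.
- by rewrite unitmx_mul uM.
- rewrite -!mulmxA; congr (M *m _).
  rewrite mulmxDl mul1mx /G.
  have -> : P *m (J - A) *m invmx A *m invmx P *m (P *m A) = P *m (J - A).
    by rewrite mulmxA mulmxKV // mulmxKV.
  by rewrite -mulmxDr addrC subrK.
- apply: le_trans (opnormM _ _) _; apply: ler_wpM2l; first exact: opnorm_ge0.
  apply: le_trans (opnormD _ _) _; apply: lerD => //; exact: opnorm1.
- rewrite invmxM //; apply: le_trans (opnormM _ _) _.
  by apply: ler_wpM2r; [exact: opnorm_ge0|].
Qed.

Lemma final_conf {R : realType} {d : nat} (Q M P : 'M[R]_d) (kappa S : R) :
  Q = M *m P -> M \in unitmx -> P \in unitmx ->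
  opnorm P * opnorm (invmx P) <= kappa ->
  0 <= S -> S <= 1/2 ->
  opnorm M <= (1 - S)^-1 -> opnorm (invmx M) <= (1 - S)^-1 ->
  conformal (4 * kappa) Q.
Proof.
move=> -> uM uP hP S0 S1 hM hMi; split; first by rewrite unitmx_mul uM.
have i2 : (1 - S)^-1 <= 2.
  rewrite -[2]invrK lef_pV2 ?posrE; [lra|lra|lra].
rewrite invmxM //.
have a := opnormM M P; have b := opnormM (invmx P) (invmx M).
have m0 := opnorm_ge0 M; have m1 := opnorm_ge0 (invmx M).
have p0 := opnorm_ge0 P; have p1 := opnorm_ge0 (invmx P).
have c : opnorm M * opnorm (invmx M) <= 4.
  apply: le_trans (_ : 2 * 2 <= 4); last lra.
  apply: ler_pM => //; apply: le_trans i2; done.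
apply: le_trans (_ : (opnorm M * opnorm P) * (opnorm (invmx P) * opnorm (invmx M)) <= _).
  by apply: ler_pM => //; exact: opnorm_ge0.
have -> : opnorm M * opnorm P * (opnorm (invmx P) * opnorm (invmx M)) =
   (opnorm M * opnorm (invmx M)) * (opnorm P * opnorm (invmx P)) by ring.
by apply: ler_pM => //; rewrite mulr_ge0.
Qed.

Lemma chain4 {R : realType} (a b c e k B Cc : R) :
  0 <= a -> 0 <= b -> 0 <= c -> 0 <= e ->
  a * e <= k -> b <= B -> c <= Cc -> ((a * b) * c) * e <= k * B * Cc.
Proof.
move=> a0 b0 c0 e0 h1 h2 h3.
have -> : a * b * c * e = (a * e) * b * c by ring.
apply: ler_pM; [by rewrite !mulr_ge0|done| |done].
by apply: ler_pM => //; rewrite mulr_ge0.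
Qed.


Theorem mainTheorem7 (R : realType) (d : nat) (Rr C kappa lamU lamL alpha : R) :
  0 < Rr -> 0 < C -> 1 <= kappa -> lamU < 1 -> 0 < lamL -> lamL < lamU ->
  0 < alpha < 1 ->
  exists xi0 : R, exists kappabar : R, 0 < xi0 /\ 1 < kappabar /\
  forall hs : nat -> 'rV[R]_d -> 'rV[R]_d,
    (forall j : nat,
      [/\ C1alpha_diffeo Rr alpha (hs j) /\ hs j 0 = 0,
          (C1alpha_norm Rr alpha (hs j) < C%:E)%E,
          (forall y, Bball Rr y ->
             lamL < mnorm (jac (hs j) y) /\ mnorm (jac (hs j) y) <= opnorm (jac (hs j) y)
             /\ opnorm (jac (hs j) y) < lamU) &
          conformal kappa (jac (iter_seq hs j.+1) 0)]) ->
    forall x, Bball xi0 x -> forall n : nat,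
      conformal kappabar (jac (iter_seq hs n) x).
Proof.
move=> R0 C0 k1 lU1 lL0 lLU /andP[a0 a1].
have lU0 : 0 < lamU by apply: lt_trans lLU.
set q := lamU `^ alpha.
have q0 : 0 <= q by exact: powR_ge0.
have q1 : q < 1.
  have := @gt0_ltr_powR _ alpha a0 lamU 1; rewrite !nnegrE ltW // ler01 powR1.
  by move=> /(_ isT isT lU1).
set K := kappa * C / lamL.
have kp : 0 < kappa by lra.
have K0 : 0 < K by rewrite /K divr_gt0 // mulr_gt0.
set t := (1 - q) / (2 * K).
have t0 : 0 < t.
  by apply: divr_gt0; [rewrite subr_gt0 | exact: mulr_gt0].
set xi0 := Num.min (Num.min 1 Rr) (t `^ alpha^-1).
exists xi0, (4 * kappa); split.
  by rewrite /xi0 !lt_min ltr01 R0 powR_gt0.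
split; first lra.
move=> hs H x xB.
have dh : forall j z, Bball Rr z -> differentiable (hs j) z.
  by move=> j z zB; have [[[[dh _] _ _ _ _] _] _ _ _] := H j; exact: dh.
have h0 : forall j, hs j 0 = 0 by move=> j; have [[_ ?] _ _ _] := H j.
have hC : forall j, (C1alpha_norm Rr alpha (hs j) < C%:E)%E by move=> j; have [_ ? _ _] := H j.
have hD : forall j y, Bball Rr y -> lamL < mnorm (jac (hs j) y) /\ opnorm (jac (hs j) y) < lamU.
  by move=> j y yB; have [_ _ hD _] := H j; have [? [_ ?]] := hD y yB.
have hK : forall j, conformal kappa (jac (iter_seq hs j.+1) 0) by move=> j; have [_ _ _ ?] := H j.
have oh : forall j z, Bball Rr z -> opnorm (jac (hs j) z) <= lamU.
  by move=> j z zB; have [_ /ltW] := hD j z zB.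
have xi1 : xi0 <= 1 by rewrite /xi0 !ge_min lexx.
have xiR : xi0 <= Rr by rewrite /xi0 !ge_min lexx orbT.
have xi0p : 0 < xi0 by rewrite /xi0 !lt_min ltr01 R0 powR_gt0.
have xit : xi0 `^ alpha <= t.
  have : xi0 <= t `^ alpha^-1 by rewrite /xi0 ge_min lexx orbT.
  have := @ge0_ler_powR _ alpha (ltW a0) xi0 (t `^ alpha^-1).
  rewrite !nnegrE ltW // powR_ge0 => /(_ isT isT) h /h.
  by rewrite -powRrM mulVf ?gt_eqF // powRr1 // ltW.
have ex : enorm x < xi0 := xB.
have xBR : Bball Rr x by rewrite /Bball /=; apply: lt_le_trans xiR.
have B0 : Bball Rr (0 : 'rV[R]_d) by rewrite /Bball /= enorm0.
have yle := @iter_contract _ _ hs Rr lamU x (ltW lU0) (ltW lU1) dh oh h0 xBR.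
have yB : forall n, Bball Rr (iter_seq hs n x).
  move=> n; rewrite /Bball /=; apply: le_lt_trans (yle n) _; apply: le_lt_trans xBR.
  by apply: ler_piMl; [exact: enorm_ge0 | exact: exprn_ile1 (ltW lU0) (ltW lU1)].
have y0B : forall n, Bball Rr (iter_seq hs n 0) by move=> n; rewrite iter_at0.
have dx := @iter_diff _ _ hs Rr x yB dh.
have d0 := @iter_diff _ _ hs Rr 0 y0B dh.
have [Q QE] : exists Q : nat -> 'M[R]_d, forall n, Q n = jac (iter_seq hs n) x.
  by exists (fun n => jac (iter_seq hs n) x).
have [P PE] : exists P : nat -> 'M[R]_d, forall n, P n = jac (iter_seq hs n) 0.
  by eexists => n; reflexivity.
have [A AE] : exists A : nat -> 'M[R]_d, forall n, A n = jac (hs n) 0.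
  by eexists => n; reflexivity.
have [J JE] : exists J : nat -> 'M[R]_d, forall n, J n = jac (hs n) (iter_seq hs n x).
  by eexists => n; reflexivity.
have Qs : forall n, Q n.+1 = Q n *m J n.
  move=> n; rewrite !QE JE; exact: (@jac_iterS _ _ hs x n (dx n) (dh _ _ (yB n))).
have Ps : forall n, P n.+1 = P n *m A n.
  move=> n; rewrite !PE AE.
  have := @jac_iterS _ _ hs 0 n (d0 n) (dh _ _ (y0B n)).
  by rewrite iter_at0.
have PK : forall n, P n \in unitmx /\ opnorm (P n) * opnorm (invmx (P n)) <= kappa.
  case=> [|j]; last by rewrite PE; exact: hK j.
  rewrite PE jac_id invmx1; split; first exact: unitmx1.
  have o := @opnorm1 R d; have o0 := @opnorm_ge0 R d 1%:M.
  apply: le_trans k1; rewrite -[1 in X in _ <= X](mulr1 1).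
  exact: ler_pM.
have AU : forall n, A n \in unitmx /\ opnorm (invmx (A n)) <= lamL^-1.
  move=> n; have [m1 _] := hD n 0 B0.
  have [u i] := @mnorm_inv _ _ (jac (hs n) 0) (lt_trans lL0 m1).
  rewrite AE; split => //; apply: le_trans i _.
  by rewrite lef_pV2 ?posrE ?ltW // (lt_trans lL0 m1).
have EB : forall n, opnorm (J n - A n) <= C * (q ^+ n * xi0 `^ alpha).
  move=> n; rewrite JE AE.
  have y1 : enorm (iter_seq hs n x) < 1.
    apply: le_lt_trans (yle n) _; apply: lt_le_trans xi1; apply: le_lt_trans ex.
    by apply: ler_piMl; [exact: enorm_ge0 | exact: exprn_ile1 (ltW lU0) (ltW lU1)].
  apply: le_trans (@holder_ext _ _ (hs n) Rr alpha C (iter_seq hs n x) (hC n) (ltW C0) R0 (yB n) y1) _.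
  apply: ler_wpM2l; first exact: ltW.
  have := @ge0_ler_powR _ alpha (ltW a0) (enorm (iter_seq hs n x)) (lamU ^+ n * enorm x).
  rewrite !nnegrE enorm_ge0 mulr_ge0 ?exprn_ge0 ?enorm_ge0 ?(ltW lU0) // => /(_ isT isT (yle n)) h.
  apply: le_trans h _; rewrite powRM ?exprn_ge0 ?enorm_ge0 ?(ltW lU0) //.
  have -> : (lamU ^+ n) `^ alpha = q ^+ n.
    by rewrite -powR_mulrn ?(ltW lU0) // -powRrM mulrC powRrM powR_mulrn // powR_ge0.
  apply: ler_wpM2l; first exact: exprn_ge0.
  have := @ge0_ler_powR _ alpha (ltW a0) (enorm x) xi0.
  by rewrite !nnegrE enorm_ge0 ltW // => /(_ isT isT (ltW ex)).
set eps := K * xi0 `^ alpha.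
have eps0 : 0 <= eps by rewrite /eps mulr_ge0 ?powR_ge0 // ltW.
have epsle : eps <= (1 - q) / 2.
  apply: le_trans (_ : K * t <= _).
    by apply: ler_wpM2l => //; exact: ltW.
  rewrite /t; rewrite le_eqVlt; apply/orP; left; apply/eqP; field.
  by rewrite gt_eqF.
set S := fun n => eps * \sum_(k < n) q ^+ k.
have S0 : forall n, 0 <= S n.
  by move=> n; rewrite /S mulr_ge0 // sumr_ge0 // => k _; rewrite exprn_ge0.
have S12 : forall n, S n <= 1/2.
  move=> n; rewrite /S; apply: (@le_trans _ _ (eps * (1 - q)^-1)).
    by apply: ler_wpM2l => //; exact: geom_le.
  rewrite ler_pdivrMr ?subr_gt0 //; apply: le_trans epsle _.
  rewrite le_eqVlt; apply/orP; left; apply/eqP; field.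
  done.
have SS : forall n, S n.+1 = S n + eps * q ^+ n.
  by move=> m; rewrite /S big_ord_recr /= mulrDr.
have GB : forall n,
  opnorm (P n *m (J n - A n) *m invmx (A n) *m invmx (P n)) <= eps * q ^+ n.
  move=> n.
  have h1 := opnormM (P n *m (J n - A n) *m invmx (A n)) (invmx (P n)).
  have h2 := opnormM (P n *m (J n - A n)) (invmx (A n)).
  have h3 := opnormM (P n) (J n - A n).
  apply: le_trans h1 _.
  apply: (@le_trans _ _ (opnorm (P n) * opnorm (J n - A n) * opnorm (invmx (A n))
                          * opnorm (invmx (P n)))).
    apply: ler_wpM2r; first exact: opnorm_ge0.
    apply: le_trans h2 _; apply: ler_wpM2r; first exact: opnorm_ge0.
    exact: h3.
  apply: le_trans (@chain4 _ _ _ _ _ _ _ _ (opnorm_ge0 _) (opnorm_ge0 _)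
     (opnorm_ge0 _) (opnorm_ge0 _) (PK n).2 (EB n) (AU n).2) _.
  rewrite le_eqVlt; apply/orP; left; apply/eqP.
  rewrite /eps /K; field; by rewrite gt_eqF.
have Inv : forall n, exists M : 'M[R]_d, [/\ M \in unitmx, Q n = M *m P n,
    opnorm M <= (1 - S n)^-1 & opnorm (invmx M) <= (1 - S n)^-1].
  elim=> [|n [M [uM QM hM hMi]]].
    have S00 : S 0 = 0 by rewrite /S big_ord0 mulr0.
    exists 1%:M; rewrite S00 subr0 invr1 invmx1; split.
    - exact: unitmx1.
    - by rewrite mul1mx QE PE !jac_id.
    - exact: opnorm1.
    - exact: opnorm1.
  have g1 : eps * q ^+ n < 1.
    have := S12 n.+1; rewrite SS; have := S0 n; lra.
  have [M' [uM' eq hM' hMi']] := @step_alg _ _ M (P n) (A n) (J n) (eps * q ^+ n)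
     uM (PK n).1 (AU n).1 (GB n) g1.
  have gq0 : 0 <= eps * q ^+ n by rewrite mulr_ge0 // exprn_ge0.
  have Sg : S n + eps * q ^+ n <= 1/2 by rewrite -SS.
  exists M'; split => //.
  - by rewrite Qs QM Ps.
  - apply: le_trans hM' _; rewrite SS.
    apply: (le_trans _ (@step1 _ (S n) (eps * q ^+ n) (S0 n) gq0 Sg)).
    apply: ler_wpM2r; last exact: hM.
    by have := gq0; lra.
  - apply: le_trans hMi' _; rewrite SS.
    apply: (le_trans _ (@step2 _ (S n) (eps * q ^+ n) (S0 n) gq0 Sg)).
    apply: ler_wpM2l; last exact: hMi.
    by rewrite invr_ge0; have := Sg; have := S0 n; lra.
move=> n; have [M [uM QM hM hMi]] := Inv n.
rewrite -QE.
exact: (@final_conf _ _ _ _ _ _ _ QM uM (PK n).1 (PK n).2 (S0 n) (S12 n) hM hMi).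
Qed.
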